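(* Let $x,y\ge 2$ be coprime integers, $p\ge 1$ an integer, and $q=pxy-1$. Choose integers $i,j$ with $xj+yi=1$ and $0<i<x$ (so $j<0$). Let $G$ be the group generated by $a,b,t$ subject to the relations $a^x=b^y$ and $\mu^q\lambda^p=t^p$, where $\mu=b^ja^i$ and $\lambda=\mu^{-xy}a^x$. Then in every quotient $H$ of $G$ one has $t^p=a^{xp-i}b^{-j}$. Consequently, if $H$ is left-orderable, then (the images of) $t$, $a$ and $b$ all have the same sign with respect to any left order on $H$.
   Context: The group $G$ is the fundamental group of the complement of the $(p,q)$-cable of the $(x,y)$-torus knot; $\mu,\lambda$ are the meridian and longitude of the torus knot and $\mu,\lambda$ commute. A left order on a group $H$ is a strict total order with $ga<gb$ whenever $a<b$; its positive cone is $P=\{g: g>1\}$. Two elements have the same sign if both lie in $P$, both lie in $P^{-1}=\{g:g<1\}$, or both equal $1$. A left-orderable group is a nontrivial group admitting a left order. *)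

(* Defs.v *)
From HB Require Import structures.
From mathcomp Require Import all_boot all_order all_algebra.
Set Implicit Arguments. Unset Strict Implicit. Unset Printing Implicit Defensive.
Import Order.TTheory GRing.Theory Num.Theory.

Definition expgz (G : groupType) (x : G) (z : int) : G :=
  match z with
  | Posz n => (x ^+ n)%g
  | Negz n => ((x ^+ n.+1)^-1)%g
  end.

Definition is_left_order (H : groupType) (lt : H -> H -> Prop) : Prop :=
  (forall g, ~ lt g g) /\
  (forall f g h, lt f g -> lt g h -> lt f h) /\
  (forall f g, f <> g -> lt f g \/ lt g f) /\
  (forall g f h, lt f h -> lt (g * f)%g (g * h)%g).

Definition left_orderable (H : groupType) : Prop :=
  (exists g : H, g <> 1%g) /\ exists lt : H -> H -> Prop, is_left_order lt.

Definition same_sign (H : groupType) (lt : H -> H -> Prop) (g h : H) : Prop :=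
  (lt 1%g g /\ lt 1%g h) \/ (lt g 1%g /\ lt h 1%g) \/ (g = 1%g /\ h = 1%g).

(* Main.v *)
Require Import Defs.
From HB Require Import structures.
From mathcomp Require Import all_boot all_order all_algebra.
From mathcomp Require Import zify.
Import Order.TTheory GRing.Theory Num.Theory.

Lemma expgzP (G : groupType) (g : G) (n : nat) : expgz g (Posz n) = (g ^+ n)%g.
Proof. by []. Qed.

Lemma expgzN (G : groupType) (g : G) (n : nat) :
  expgz g (- (Posz n))%R = ((g ^+ n)^-1)%g.
Proof. by case: n => [|n] //=; rewrite invg1. Qed.

Section Ord.
Variables (H : groupType) (lt : H -> H -> Prop).
Hypothesis hlt : is_left_order lt.

Lemma ss_refl g : same_sign lt g g.
Proof.
case: hlt => irr [tr [tot inv]].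
case: (boolP (g == 1%g)) => [/eqP->|/eqP ne]; first by right; right.
by case: (tot _ _ ne) => h; [right; left | left].
Qed.

Lemma ss_sym g h : same_sign lt g h -> same_sign lt h g.
Proof. by rewrite /same_sign; intuition. Qed.

Lemma ss_trans g h k : same_sign lt g h -> same_sign lt h k -> same_sign lt g k.
Proof.
case: hlt => irr [tr [tot inv]].
rewrite /same_sign => A B.
have nb : forall u, lt 1%g u -> lt u 1%g -> False.
  by move=> u u1 u2; apply: (irr 1%g); apply: tr u1 u2.
case: A => [[A1 A2]|[[A1 A2]|[A1 A2]]]; case: B => [[B1 B2]|[[B1 B2]|[B1 B2]]];
  subst; try by [left|right;left|right;right].
all: exfalso; first [exact: nb A2 B1 | exact: nb B1 A2].
Qed.

Lemma ss_mul g h : same_sign lt g h -> same_sign lt g (g * h)%g.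
Proof.
case: hlt => irr [tr [tot inv]].
rewrite /same_sign => [[[A1 A2]|[[A1 A2]|[A1 A2]]]].
- left; split => //; apply: tr A1 _; have := inv g _ _ A2; by rewrite mulg1.
- right; left; split => //; apply: tr _ A1; have := inv g _ _ A2; by rewrite mulg1.
- by subst; right; right; rewrite mulg1.
Qed.

Lemma ss_pow g n : (0 < n)%N -> same_sign lt g (g ^+ n)%g.
Proof.
case: n => // n _; elim: n => [|n IH]; first by rewrite expg1; apply: ss_refl.
rewrite expgS; apply: ss_mul; exact: IH.
Qed.
End Ord.
Arguments ss_refl {H lt} hlt g.
Arguments ss_sym {H lt g h}.
Arguments ss_trans {H lt} hlt {g h k}.
Arguments ss_mul {H lt} hlt {g h}.
Arguments ss_pow {H lt} hlt g {n}.

Theorem lemma3p1 (x y p q i j : int)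
  (hx : (2 <= x)%R) (hy : (2 <= y)%R) (hxy : coprimez x y)
  (hp : (1 <= p)%R) (hq : q = (p * x * y - 1)%R)
  (hij : (x * j + y * i = 1)%R) (hi0 : (0 < i)%R) (hix : (i < x)%R)
  (H : groupType) (a b t : H)
  (rel1 : expgz a x = expgz b y)
  (rel2 : let mu := (expgz b j * expgz a i)%g in
          let lambda := (expgz mu (- (x * y))%R * expgz a x)%g in
          (expgz mu q * expgz lambda p)%g = expgz t p) :
  expgz t p = (expgz a (x * p - i)%R * expgz b (- j)%R)%g /\
  (left_orderable H ->
   forall lt : H -> H -> Prop, is_left_order lt ->
     same_sign lt t a /\ same_sign lt t b /\ same_sign lt a b).
Proof.
have [X eX] : exists X : nat, x = (Posz X) by exists `|x|%N; lia.
have [Y eY] : exists Y : nat, y = (Posz Y) by exists `|y|%N; lia.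
have [P eP] : exists P : nat, p = (Posz P) by exists `|p|%N; lia.
have [I eI] : exists I : nat, i = (Posz I) by exists `|i|%N; lia.
have jneg : (j < 0)%R by subst; nia.
have [J eJ] : exists J : nat, j = (- (Posz J))%R by exists `|j|%N; lia.
subst x y p i j.
have eq1 : ((Posz P) * (Posz X) * (Posz Y) - 1)%R = (Posz (P * X * Y - 1)%N) by nia.
have eq2 : (- ((Posz X) * (Posz Y)))%R = (- (Posz (X * Y)%N))%R by lia.
have eq3 : ((Posz X) * (Posz P) - (Posz I))%R = (Posz (X * P - I)%N) by nia.
have eq4 : (- - (Posz J))%R = (Posz J) by lia.
have hPXY : (0 < P * X * Y)%N by nia.
have hXPI : (0 < X * P - I)%N by nia.
have hJ : (0 < J)%N by nia.
have hX : (0 < X)%N by lia.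
have hY : (0 < Y)%N by lia.
cbv zeta in rel2.
rewrite hq eq1 eq2 !expgzN !expgzP in rel2.
rewrite eq3 eq4 !expgzP.
rewrite !expgzP in rel1.
set z := (a ^+ X)%g.
have cza : commute z a by apply: commute_sym; apply: commuteX; apply: commute_refl.
have czb : commute z b by rewrite /z rel1; apply: commute_sym; apply: commuteX; apply: commute_refl.
set mu := ((b ^+ J)^-1 * a ^+ I)%g.
have czmu : commute z mu.
  apply: commuteM; first by apply: commuteV; apply: commuteX.
  exact: commuteX.
have key : (t ^+ P)%g = (mu^-1 * z ^+ P)%g.
  have c1 : commute (mu ^- (X * Y)) z.
    by apply: commute_sym; apply: commuteV; apply: commuteX.
  rewrite -rel2 -/mu -/z (expgMn _ c1).
  rewrite expVgn -expgnA mulgA; congr (_ * _)%g.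
  have -> : (X * Y * P = (P * X * Y - 1).+1)%N by lia.
  by rewrite expgS invgM mulgA mulgV mul1g.
have part1 : (t ^+ P)%g = (a ^+ (X * P - I) * b ^+ J)%g.
  rewrite key /mu invgM invgK /z -expgnA.
  have cb : commute (b ^+ J) (a ^+ (X * P))%g.
    apply: commute_sym; rewrite expgnA; apply: commuteX2.
    exact: czb.
  rewrite -mulgA cb mulgA; congr (_ * _)%g.
  have e : (X * P = I + (X * P - I))%N by lia.
  by rewrite {1}e expgnDr mulKg.
split => // _ lt hlt.
have sab : same_sign lt a b.
  apply: (ss_trans hlt (ss_pow hlt a hX)).
  rewrite rel1; apply: ss_sym => //; exact: ss_pow.
have hP : (0 < P)%N by lia.
have s1 := ss_pow hlt t hP.
have s2 := ss_pow hlt a hXPI.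
have s3 := ss_pow hlt b hJ.
have s4 : same_sign lt (a ^+ (X * P - I))%g (b ^+ J)%g.
  exact: (ss_trans hlt (ss_sym s2) (ss_trans hlt sab s3)).
have s5 := ss_mul hlt s4.
have sta : same_sign lt t a.
  apply: (ss_trans hlt s1); rewrite part1; apply: ss_sym.
  exact: (ss_trans hlt s2 s5).
by split => //; split => //; exact: (ss_trans hlt sta sab).
Qed.
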